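(* Let $\mathcal{O}$ be a $\Bbbk$-linear cyclic operad with multiplication and consider the associated cocyclic module with cochain complex $\mathcal{C}^*(\mathcal{O})$. Then the cyclic cochains $\mathcal{C}^n_\lambda(\mathcal{O})=\{f\in\mathcal{O}(n):\tau_nf=(-1)^nf\}$ form a subcomplex $\mathcal{C}^*_\lambda(\mathcal{O})$ of $\mathcal{C}^*(\mathcal{O})$ which is stable under the Lie bracket of degree $-1$. In particular, the cyclic cohomology $HC^*_\lambda(\mathcal{C}^*(\mathcal{O}))$ (the cohomology of $\mathcal{C}^*_\lambda(\mathcal{O})$) has naturally a structure of graded Lie algebra of degree $-1$.
   Context: $\Bbbk$ is a commutative ring. A non-symmetric operad $\mathcal{O}$ has modules $\mathcal{O}(n)$, an identity $id\in\mathcal{O}(1)$ and associative unital partial compositions $\circ_i:\mathcal{O}(m)\otimes\mathcal{O}(n)\to\mathcal{O}(m+n-1)$. It is cyclic if equipped with linear maps $\tau_n:\mathcal{O}(n)\to\mathcal{O}(n)$ with $\tau_n^{n+1}=id$, $\tau_{m+n-1}(f\circ_1g)=\tau_ng\circ_n\tau_mf$ for $m,n\ge1$, and $\tau_{m+n-1}(f\circ_ig)=\tau_mf\circ_{i-1}g$ for $m\ge2$, $n\ge0$, $2\le i\le m$. A cyclic operad with multiplication is a cyclic operad with $\mu\in\mathcal{O}(2)$, $e\in\mathcal{O}(0)$ such that $\mu\circ_1\mu=\mu\circ_2\mu$, $\mu\circ_1e=id=\mu\circ_2e$ and $\tau_2\mu=\mu$. The cochain complex $\mathcal{C}^*(\mathcal{O})$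 has $\mathcal{O}(n)$ in degree $n$ and differential $df=\mu\circ_2f+\sum_{i=1}^n(-1)^if\circ_i\mu+(-1)^{n+1}\mu\circ_1f$ (cofaces $\delta_0f=\mu\circ_2f$, $\delta_if=f\circ_i\mu$, $\delta_{n+1}f=\mu\circ_1f$, codegeneracies $\sigma_{i-1}f=f\circ_ie$, cyclic operators $\tau_n$). The Lie bracket of degree $-1$ on $\mathcal{C}^*(\mathcal{O})$ is $\{f,g\}=f\bar\circ g-(-1)^{(m-1)(n-1)}g\bar\circ f$ with $f\bar\circ g=(-1)^{(m-1)(n-1)}\sum_{i=1}^m(-1)^{(n-1)(i-1)}f\circ_ig$ for $f\in\mathcal{O}(m)$, $g\in\mathcal{O}(n)$. *)

(* Defs.v *)
From HB Require Import structures.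
From mathcomp Require Import all_boot all_order all_algebra.
Set Implicit Arguments. Unset Strict Implicit. Unset Printing Implicit Defensive.
Import Order.TTheory GRing.Theory Num.Theory.
Local Open Scope ring_scope.

Definition castO (O : nat -> Type) (m n : nat) (e : m = n) (x : O m) : O n :=
  eq_rect m O x n e.

(* A k-linear non-symmetric cyclic operad with multiplication.
   op n = O(n); comp m n i f g = f o_i g in O(m+n-1) (meaningful for 1<=i<=m);
   tau n = tau_n; mu in O(2), e in O(0). *)
Record CycOpMult (R : comPzRingType) := {
  op : nat -> lmodType R;
  oid : op 1;
  comp : forall m n : nat, nat -> op m -> op n -> op (m + n - 1);
  tau : forall n : nat, op n -> op n;
  mu : op 2;
  unit0 : op 0;
  comp_linl : forall m n i (a : R) (f f' : op m) (g : op n),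
    comp i (a *: f + f') g = a *: comp i f g + comp i f' g;
  comp_linr : forall m n i (a : R) (f : op m) (g g' : op n),
    comp i f (a *: g + g') = a *: comp i f g + comp i f g';
  tau_lin : forall n (a : R) (f f' : op n),
    tau (a *: f + f') = a *: tau f + tau f';
  comp_assoc_seq : forall m n p i j (f : op m) (g : op n) (h : op p)
    (eq : ((m + n - 1) + p - 1 = m + (n + p - 1) - 1)%N),
    (1 <= i <= m)%N -> (1 <= j <= n)%N ->
    @castO (fun k => op k) _ _ eq (comp (i + j - 1)%N (comp i f g) h) = comp i f (comp j g h);
  comp_assoc_par : forall m n p i j (f : op m) (g : op n) (h : op p)
    (eq : ((m + n - 1) + p - 1 = (m + p - 1) + n - 1)%N),
    (1 <= i)%N -> (i < j)%N -> (j <= m)%N ->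
    @castO (fun k => op k) _ _ eq (comp (j + n - 1)%N (comp i f g) h) = comp i (comp j f h) g;
  comp_unitl : forall n (f : op n) (eq : (1 + n - 1 = n)%N),
    @castO (fun k => op k) _ _ eq (comp 1 oid f) = f;
  comp_unitr : forall m i (f : op m) (eq : (m + 1 - 1 = m)%N),
    (1 <= i <= m)%N -> @castO (fun k => op k) _ _ eq (comp i f oid) = f;
  tau_period : forall n (f : op n), iter n.+1 (fun x : op n => tau x) f = f;
  tau_comp1 : forall m n (f : op m) (g : op n) (eq : (n + m - 1 = m + n - 1)%N),
    (1 <= m)%N -> (1 <= n)%N ->
    tau (comp 1 f g) = @castO (fun k => op k) _ _ eq (comp n (tau g) (tau f));
  tau_compi : forall m n i (f : op m) (g : op n),
    (2 <= m)%N -> (2 <= i <= m)%N ->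
    tau (comp i f g) = comp (i - 1)%N (tau f) g;
  mu_assoc : comp 1 mu mu = comp 2 mu mu;
  mu_unit1 : forall eq : (2 + 0 - 1 = 1)%N, @castO (fun k => op k) _ _ eq (comp 1 mu unit0) = oid;
  mu_unit2 : forall eq : (2 + 0 - 1 = 1)%N, @castO (fun k => op k) _ _ eq (comp 2 mu unit0) = oid;
  tau_mu : tau mu = mu
}.

Arguments op {R} O n : rename.
Arguments oid {R} O : rename.
Arguments comp {R} O {m n} i f g : rename.
Arguments tau {R} O {n} f : rename.
Arguments mu {R} O : rename.
Arguments unit0 {R} O : rename.

Section Complex.
Variables (R : comPzRingType) (O : CycOpMult R).

Lemma arity_d (n : nat) : (n + 2 - 1 = n.+1)%N.
Proof. by rewrite addn2 subn1. Qed.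

Lemma arity_swap (m n : nat) : (n + m - 1 = m + n - 1)%N.
Proof. by rewrite addnC. Qed.

Definition dO (n : nat) (f : op O n) : op O n.+1 :=
  (comp O 2 (mu O) f : op O n.+1)
  + \sum_(1 <= i < n.+1) (-1) ^+ i *: @castO (fun k => op O k) _ _ (arity_d n) (comp O i f (mu O))
  + (-1) ^+ n.+1 *: (comp O 1 (mu O) f : op O n.+1).

Definition sgn2 (a b : nat) : R :=
  (-1) ^+ `|((a%:Z - 1) * (b%:Z - 1))%R|%N.

Definition bcirc (m n : nat) (f : op O m) (g : op O n) : op O (m + n - 1)%N :=
  sgn2 m n *: \sum_(1 <= i < m.+1) sgn2 n i *: comp O i f g.

Definition bracket (m n : nat) (f : op O m) (g : op O n) : op O (m + n - 1)%N :=
  bcirc f g - sgn2 m n *: @castO (fun k => op O k) _ _ (arity_swap m n) (bcirc g f).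

Definition is_cyclic (n : nat) (f : op O n) : Prop :=
  tau O f = (-1) ^+ n *: f.

End Complex.

(* Main.v *)
From Pilot Require Import Defs.
From HB Require Import structures.
From mathcomp Require Import all_boot all_order all_algebra.
From mathcomp Require Import ring zify.
Import GRing.Theory.
Set Implicit Arguments. Unset Strict Implicit. Unset Printing Implicit Defensive.
Local Open Scope ring_scope.

Notation ocomp := Pilot.Defs.comp.

Lemma dbl0 (V : zmodType) (x : V) : x = x + x -> x = 0.
Proof. by rewrite -{1}[x]addr0 => /addrI ->. Qed.

Lemma castO_irr (R : comPzRingType) (O : CycOpMult R) a b (e1 e2 : a = b) (x : op O a) :
  @castO (fun k => op O k) _ _ e1 x = @castO (fun k => op O k) _ _ e2 x.
Proof. by rewrite (eq_irrelevance e1 e2). Qed.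

Lemma castO_id (R : comPzRingType) (O : CycOpMult R) a (e : a = a) (x : op O a) :
  @castO (fun k => op O k) _ _ e x = x.
Proof. by rewrite (eq_irrelevance e erefl). Qed.

Lemma castOK (R : comPzRingType) (O : CycOpMult R) a b c (e1 : a = b) (e2 : b = c) (x : op O a) :
  @castO (fun k => op O k) _ _ e2 (@castO (fun k => op O k) _ _ e1 x) =
  @castO (fun k => op O k) _ _ (etrans e1 e2) x.
Proof. by case: c / e2; case: b / e1. Qed.

Lemma castO_tau (R : comPzRingType) (O : CycOpMult R) a b (e : a = b) (x : op O a) :
  tau O (@castO (fun k => op O k) _ _ e x) = @castO (fun k => op O k) _ _ e (tau O x).
Proof. by case: b / e. Qed.

Lemma castOZ (R : comPzRingType) (O : CycOpMult R) a b (e : a = b) (c : R) (x : op O a) :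
  @castO (fun k => op O k) _ _ e (c *: x) = c *: @castO (fun k => op O k) _ _ e x.
Proof. by case: b / e. Qed.

Lemma castOD (R : comPzRingType) (O : CycOpMult R) a b (e : a = b) (x y : op O a) :
  @castO (fun k => op O k) _ _ e (x + y) = @castO (fun k => op O k) _ _ e x + @castO (fun k => op O k) _ _ e y.
Proof. by case: b / e. Qed.

Lemma castON (R : comPzRingType) (O : CycOpMult R) a b (e : a = b) (x : op O a) :
  @castO (fun k => op O k) _ _ e (- x) = - @castO (fun k => op O k) _ _ e x.
Proof. by case: b / e. Qed.

Lemma castO0 (R : comPzRingType) (O : CycOpMult R) a b (e : a = b) :
  @castO (fun k => op O k) _ _ e 0 = 0.
Proof. by case: b / e. Qed.

Lemma castO_sum (R : comPzRingType) (O : CycOpMult R) a b (e : a = b) (r : seq nat) (P : pred nat) (F : nat -> op O a) :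
  @castO (fun k => op O k) _ _ e (\sum_(i <- r | P i) F i) = \sum_(i <- r | P i) @castO (fun k => op O k) _ _ e (F i).
Proof. by case: b / e. Qed.

Lemma tauD (R : comPzRingType) (O : CycOpMult R) n (x y : op O n) : tau O (x + y) = tau O x + tau O y.
Proof. by have := @tau_lin _ O _ 1 x y; rewrite !scale1r. Qed.

Lemma tau0 (R : comPzRingType) (O : CycOpMult R) n : tau O (0 : op O n) = 0.
Proof.
have := tauD (0 : op O n) 0; rewrite addr0; apply: dbl0.
Qed.

Lemma tauZ (R : comPzRingType) (O : CycOpMult R) n (c : R) (x : op O n) : tau O (c *: x) = c *: tau O x.
Proof. by have := @tau_lin _ O _ c x 0; rewrite !addr0 tau0 addr0. Qed.

Lemma tauN (R : comPzRingType) (O : CycOpMult R) n (x : op O n) : tau O (- x) = - tau O x.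
Proof. by rewrite -scaleN1r tauZ scaleN1r. Qed.

Lemma tau_sum (R : comPzRingType) (O : CycOpMult R) n (r : seq nat) (P : pred nat) (F : nat -> op O n) :
  tau O (\sum_(i <- r | P i) F i) = \sum_(i <- r | P i) tau O (F i).
Proof. by apply: (big_morph _ (@tauD R O n) (@tau0 R O n)). Qed.

Lemma compl0 (R : comPzRingType) (O : CycOpMult R) (m n i : nat) (g : op O n) : ocomp O i (0 : op O m) g = 0.
Proof.
have := @comp_linl _ O m n i 1 0 0 g; rewrite !scale1r addr0; exact: dbl0.
Qed.

Lemma compr0 (R : comPzRingType) (O : CycOpMult R) (m n i : nat) (f : op O m) : ocomp O i f (0 : op O n) = 0.
Proof.
have := @comp_linr _ O m n i 1 f 0 0; rewrite !scale1r addr0; exact: dbl0.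
Qed.

Lemma complZ (R : comPzRingType) (O : CycOpMult R) (m n i : nat) (c : R) (f : op O m) (g : op O n) :
  ocomp O i (c *: f) g = c *: ocomp O i f g.
Proof. by have := @comp_linl _ O m n i c f 0 g; rewrite !addr0 compl0 addr0. Qed.

Lemma comprZ (R : comPzRingType) (O : CycOpMult R) (m n i : nat) (c : R) (f : op O m) (g : op O n) :
  ocomp O i f (c *: g) = c *: ocomp O i f g.
Proof. by have := @comp_linr _ O _ _ i c f g 0; rewrite !addr0 compr0 addr0. Qed.

Lemma sign2 (R : comPzRingType) k : ((-1) ^+ k * (-1) ^+ k = 1 :> R).
Proof. by rewrite -signr_odd -signr_addb addbb. Qed.

Lemma tau_iter_comp (R : comPzRingType) (O : CycOpMult R) (m p : nat) (h : op O m) (g : op O p) (k i : nat) :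
  (k < i)%N -> (i <= m)%N ->
  iter k (fun x => tau O x) (ocomp O i h g) = ocomp O (i - k) (iter k (fun x => tau O x) h) g.
Proof.
elim: k => [|k IH] Hki Him; first by rewrite subn0.
rewrite iterS IH ?(ltnW Hki) // tau_compi.
- by rewrite -iterS; have -> : (i - k - 1 = i - k.+1)%N by rewrite -subnDA addn1.
- lia.
- apply/andP; split; lia.
Qed.

Lemma tau_period' (R : comPzRingType) (O : CycOpMult R) (n k : nat) (x : op O n) :
  k = n.+1 -> iter k (fun x => tau O x) x = x.
Proof. by move=> ->; apply: tau_period. Qed.

Lemma tau_comp1_0 (R : comPzRingType) (O : CycOpMult R) (m : nat) (f : op O m) (g : op O 0) :
  (1 <= m)%N -> tau O (ocomp O 1 f g) = ocomp O m (iter 2 (fun x => tau O x) f) g.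
Proof.
move=> Hm.
set h := iter 2 (fun x => tau O x) f.
have Hf : iter (m - 1) (fun x => tau O x) h = f.
  by rewrite /h -iterD; apply: tau_period'; lia.
have E : ocomp O 1 f g = iter (m - 1) (fun x => tau O x) (ocomp O m h g).
  rewrite tau_iter_comp; [|lia|lia].
  by rewrite Hf; have -> : (m - (m - 1) = 1)%N by lia.
rewrite E -iterS; apply: tau_period'.
lia.
Qed.

Definition lin4 (R : comPzRingType) (V : lmodType R) (A B C D : V) (a b c d : R) : V :=
  a *: A + b *: B + c *: C + d *: D.

Lemma lin4D (R : comPzRingType) (V : lmodType R) (A B C D : V) a b c d a' b' c' d' :
  lin4 A B C D a b c d + lin4 A B C D a' b' c' d' = lin4 A B C D (a + a') (b + b') (c + c') (d + d').
Proof. by rewrite /lin4 !scalerDl addrACA; congr (_ + _); rewrite addrACA; congr (_ + _); rewrite addrACA. Qed.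

Lemma lin4Z (R : comPzRingType) (V : lmodType R) (A B C D : V) k a b c d :
  k *: lin4 A B C D a b c d = lin4 A B C D (k * a) (k * b) (k * c) (k * d).
Proof. by rewrite /lin4 !scalerDr !scalerA. Qed.

Lemma lin4N (R : comPzRingType) (V : lmodType R) (A B C D : V) a b c d :
  - lin4 A B C D a b c d = lin4 A B C D (- a) (- b) (- c) (- d).
Proof. by rewrite -scaleN1r lin4Z !mulN1r. Qed.

Lemma lin4A (R : comPzRingType) (V : lmodType R) (A B C D : V) :
  (A = lin4 A B C D 1 0 0 0) * (B = lin4 A B C D 0 1 0 0) * (C = lin4 A B C D 0 0 1 0) *
  (D = lin4 A B C D 0 0 0 1).
Proof. by rewrite /lin4 !scale1r !scale0r ?add0r ?addr0. Qed.

Lemma lin4_eq (R : comPzRingType) (V : lmodType R) (A B C D : V) a b c d a' b' c' d' :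
  a = a' -> b = b' -> c = c' -> d = d' -> lin4 A B C D a b c d = lin4 A B C D a' b' c' d'.
Proof. by move=> -> -> -> ->. Qed.

Ltac lin_solve A B C D :=
  let L := fresh "L" in
  pose L := lin4 A B C D;
  let eA := fresh "eA" in let eB := fresh "eB" in let eC := fresh "eC" in let eD := fresh "eD" in
  have eA : A = L 1 0 0 0 := (lin4A A B C D).1.1.1;
  have eB : B = L 0 1 0 0 := (lin4A A B C D).1.1.2;
  have eC : C = L 0 0 1 0 := (lin4A A B C D).1.2;
  have eD : D = L 0 0 0 1 := (lin4A A B C D).2;
  rewrite eA eB eC eD;
  let LD := fresh "LD" in let LZ := fresh "LZ" in let LN := fresh "LN" in
  have LD : forall a b c d a' b' c' d', L a b c d + L a' b' c' d' = L (a + a') (b + b') (c + c') (d + d')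
    := lin4D A B C D;
  have LZ : forall k a b c d, k *: L a b c d = L (k * a) (k * b) (k * c) (k * d) := lin4Z A B C D;
  have LN : forall a b c d, - L a b c d = L (- a) (- b) (- c) (- d) := lin4N A B C D;
  repeat rewrite ?LD ?LZ ?LN;
  rewrite /L; apply: lin4_eq.

Lemma tau_sumZ (R : comPzRingType) (O : CycOpMult R) n (r : seq nat) (P : pred nat) (c : nat -> R) (F : nat -> op O n) :
  tau O (\sum_(i <- r | P i) c i *: F i) = \sum_(i <- r | P i) c i *: tau O (F i).
Proof. rewrite tau_sum; apply: eq_bigr => i _; exact: tauZ. Qed.

Lemma dO_cyclic (R : comPzRingType) (O : CycOpMult R) (n : nat) (f : op O n) :
  is_cyclic f -> is_cyclic (dO f).
Proof.
rewrite /is_cyclic /dO => Hf.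
rewrite !tauD !tauZ tau_sum.
case: n f Hf => [|n] f Hf.
  rewrite !big_geq // (@tau_compi _ O 2 0 2 (mu O) f) // (tau_comp1_0 (mu O) f) // /= !tau_mu.
  have -> : (2 - 1 = 1)%N by [].
  by rewrite !addr0 expr1 !scaleN1r opprD opprK addrC.
rewrite (@tau_compi _ O 2 n.+1 2 (mu O) f) // tau_mu.
have -> : (2 - 1 = 1)%N by [].
rewrite (@tau_comp1 _ O 2 n.+1 (mu O) f (arity_d n.+1)) // Hf tau_mu complZ castOZ.
under eq_bigr do rewrite tauZ castO_tau.
rewrite [in X in X = _]big_nat_recl // [in X in _ = X]big_nat_recr //=.
rewrite (@tau_comp1 _ O n.+1 2 f (mu O) (esym (arity_d n.+1))) // castOK castO_id Hf tau_mu comprZ.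
rewrite (@eq_big_nat _ _ _ 1 n.+1 _ (fun i : nat => ((-1)^+n.+2 *: ((-1)^+i *: @castO (fun k => op O k) _ _ (arity_d n.+1) (ocomp O i f (mu O))) : op O n.+2))); last first.
  move=> i /andP[Hi1 Hi2].
  rewrite (@tau_compi _ O n.+1 2 i.+1 f (mu O)); [|lia|lia].
  rewrite Hf complZ castOZ !scalerA; congr (_ *: _).
    by rewrite !exprS; ring.
  by have -> : (i.+1 - 1 = i)%N by rewrite subn1.
rewrite -scaler_sumr.
set A := ocomp O 1 (mu O) f.
set B := ocomp O 2 (mu O) f.
set S := \sum_(1 <= i < n.+1) _.
set C := castO _ (ocomp O n.+1 f (mu O)).
clearbody A B S C.
lin_solve A B S C; rewrite !exprS -[(-1) ^+ n]signr_odd; case: (odd n); rewrite ?expr0 ?expr1; ring.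
Qed.

Lemma sgn2S (R : comPzRingType) a b : sgn2 R a.+1 b.+1 = (-1) ^+ (a * b).
Proof. rewrite /sgn2. have -> : ((a.+1%:Z - 1) * (b.+1%:Z - 1) = (a * b)%N :> int). rewrite PoszM. lia. by []. Qed.
Lemma sgn20S (R : comPzRingType) b : sgn2 R 0 b.+1 = (-1) ^+ b.
Proof. rewrite /sgn2. have -> : ((0%:Z - 1) * (b.+1%:Z - 1) = - (b%:Z) :> int). lia. by rewrite abszN. Qed.
Lemma sgn2S0 (R : comPzRingType) a : sgn2 R a.+1 0 = (-1) ^+ a.
Proof. rewrite /sgn2. have -> : ((a.+1%:Z - 1) * (0%:Z - 1) = - (a%:Z) :> int). lia. by rewrite abszN. Qed.

Ltac lin_solve2 A B :=
  let z1 := fresh "z" in let z2 := fresh "z" in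
  pose z1 := 0 *: A; pose z2 := 0 *: A;
  let L := fresh "L" in
  pose L := lin4 A B z1 z2;
  let eA := fresh "eA" in let eB := fresh "eB" in
  have eA : A = L 1 0 0 0 := (lin4A A B z1 z2).1.1.1;
  have eB : B = L 0 1 0 0 := (lin4A A B z1 z2).1.1.2;
  rewrite eA eB;
  let LD := fresh "LD" in let LZ := fresh "LZ" in let LN := fresh "LN" in
  have LD : forall a b c d a' b' c' d', L a b c d + L a' b' c' d' = L (a + a') (b + b') (c + c') (d + d')
    := lin4D A B z1 z2;
  have LZ : forall k a b c d, k *: L a b c d = L (k * a) (k * b) (k * c) (k * d) := lin4Z A B z1 z2;
  have LN : forall a b c d, - L a b c d = L (- a) (- b) (- c) (- d) := lin4N A B z1 z2;
  repeat rewrite ?LD ?LZ ?LN;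
  rewrite /L; apply: lin4_eq.

Lemma bcirc0_cyclic (R : comPzRingType) (O : CycOpMult R) (m : nat) (f : op O m) (g : op O 0) :
  is_cyclic f -> is_cyclic (bcirc f g).
Proof.
rewrite /is_cyclic /bcirc => Hf.
case: m f Hf => [|m] f Hf.
  by rewrite big_geq // !scaler0 tau0.
rewrite tauZ tau_sum.
under eq_bigr do rewrite tauZ.
rewrite [in X in X = _]big_nat_recl // [in X in _ = X]big_nat_recr //=.
rewrite (tau_comp1_0 f g) // /= Hf tauZ Hf scalerA sign2 scale1r.
rewrite (@eq_big_nat _ _ _ 1 m.+1 _ (fun i : nat => ((-1)^+m *: (sgn2 R 0 i *: ocomp O i f g)) : op O (m.+1 + 0 - 1))); last first.
  move=> i /andP[Hi1 Hi2].
  rewrite (@tau_compi _ O m.+1 0 i.+1 f g); [|lia|lia].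
  have -> : (i.+1 - 1 = i)%N by rewrite subn1.
  rewrite Hf complZ !scalerA; congr (_ *: _).
  case: i Hi1 Hi2 => [|i] // _ _.
  by rewrite !sgn20S !exprS; ring.
rewrite -scaler_sumr.
set A := ocomp O m.+1 f g.
set S := \sum_(1 <= i < m.+1) _.
clearbody A S.
have -> : (-1) ^+ (m.+1 + 0 - 1) = ((-1) ^+ m : R) by congr (_ ^+ _); lia.
lin_solve2 A S; rewrite ?sgn20S ?sgn2S0 ?exprS -?[(-1) ^+ m]signr_odd; case: (odd m); rewrite ?expr0 ?expr1; ring.
Qed.

Lemma bracket_cyclic (R : comPzRingType) (O : CycOpMult R) (m n : nat) (f : op O m) (g : op O n) :
  is_cyclic f -> is_cyclic g -> is_cyclic (bracket f g).
Proof.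
move=> Hf Hg.
case: m f Hf => [|m] f Hf.
  rewrite /is_cyclic /bracket.
  have -> : bcirc f g = 0 by rewrite /bcirc big_geq // scaler0.
  rewrite sub0r tauN tauZ castO_tau (@bcirc0_cyclic _ O n g f Hg).
  have -> : (-1) ^+ (n + 0 - 1) = ((-1) ^+ (0 + n - 1) : R) by rewrite addn0 add0n.
  rewrite !castOZ !scalerN !scalerA; congr (- (_ *: _)); ring.
case: n g Hg => [|n] g Hg.
  rewrite /is_cyclic /bracket.
  have -> : bcirc g f = 0 by rewrite /bcirc big_geq // scaler0.
  rewrite castO0 scaler0 subr0.
  exact: bcirc0_cyclic.
move: Hf Hg; rewrite /is_cyclic /bracket /bcirc => Hf Hg.
have -> : (-1) ^+ (m.+1 + n.+1 - 1) = ((-1) ^+ (m + n).+1 : R) by congr (_ ^+ _); lia.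
rewrite tauD tauN !tauZ castO_tau tauZ !tau_sumZ.
rewrite (@big_nat_recl _ 0 +%R n.+1 1 (fun i => sgn2 R m.+1 i *: tau O (ocomp O i g f))) //.
rewrite (@big_nat_recr _ 0 +%R n.+1 1 (fun i => sgn2 R m.+1 i *: ocomp O i g f)) //=.
rewrite (@big_nat_recl _ 0 +%R m.+1 1 (fun i => sgn2 R n.+1 i *: tau O (ocomp O i f g))) //.
rewrite (@big_nat_recr _ 0 +%R m.+1 1 (fun i => sgn2 R n.+1 i *: ocomp O i f g)) //=.
rewrite (@tau_comp1 _ O m.+1 n.+1 f g (arity_swap m.+1 n.+1)) // Hf Hg complZ comprZ castOZ.
rewrite (@tau_comp1 _ O n.+1 m.+1 g f (arity_swap n.+1 m.+1)) // Hf Hg complZ comprZ castOZ.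
rewrite (@eq_big_nat _ _ _ 1 m.+1 _ (fun i : nat => (((-1)^+n * (-1)^+m.+1) *: (sgn2 R n.+1 i *: ocomp O i f g)) : op O (m.+1 + n.+1 - 1))); last first.
  move=> i /andP[Hi1 Hi2].
  rewrite (@tau_compi _ O m.+1 n.+1 i.+1 f g); [|lia|lia].
  have -> : (i.+1 - 1 = i)%N by rewrite subn1.
  rewrite Hf complZ !scalerA; congr (_ *: _).
  case: i Hi1 Hi2 => [|i] // _ _.
  by rewrite !sgn2S mulnS exprD; ring.
rewrite (@eq_big_nat _ _ _ 1 n.+1 _ (fun i : nat => (((-1)^+m * (-1)^+n.+1) *: (sgn2 R m.+1 i *: ocomp O i g f)) : op O (n.+1 + m.+1 - 1))); last first.
  move=> i /andP[Hi1 Hi2].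
  rewrite (@tau_compi _ O n.+1 m.+1 i.+1 g f); [|lia|lia].
  have -> : (i.+1 - 1 = i)%N by rewrite subn1.
  rewrite Hg complZ !scalerA; congr (_ *: _).
  case: i Hi1 Hi2 => [|i] // _ _.
  by rewrite !sgn2S mulnS exprD; ring.
rewrite -!scaler_sumr !castOZ !castOD !castOZ castOK castO_id.
set P := \sum_(1 <= i < m.+1) _.
set Q := \sum_(1 <= i < n.+1) _.
set X2 := ocomp O m.+1 f g.
set X3 := castO _ (ocomp O n.+1 g f).
set X4 := castO _ Q.
clearbody P X2 X3 X4.
lin_solve P X2 X3 X4; rewrite !sgn2S ?muln0 ?expr0 (mulnC n m) ?exprS ?exprD
  -?[(-1) ^+ m]signr_odd -?[(-1) ^+ n]signr_odd -?[(-1) ^+ (m * n)]signr_odd ?oddM;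
  case: (odd m); case: (odd n); rewrite /= ?expr0 ?expr1; ring.
Qed.

Unset Implicit Arguments.
Set Strict Implicit.

Theorem theorem5p5 (R : comPzRingType) (O : CycOpMult R) :
  (forall (n : nat) (f : op O n), is_cyclic f -> is_cyclic (dO f)) /\
  (forall (m n : nat) (f : op O m) (g : op O n),
     is_cyclic f -> is_cyclic g -> is_cyclic (bracket f g)).
Proof.
split; [exact: dO_cyclic | move=> m n f g; exact: bracket_cyclic].
Qed.
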